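(* With the notation below, fix $m\ge1$, $\ell$, $a=u_1<\cdots<u_{\ell+1}=b$ and a constraint set $\mathcal A$. Let $c^*(m)$ be the optimal value of the $SDPA$ problem and $y^*(m)$ the optimal value of the $SDP_0$ problem (both defined below), and suppose $y^*(m)>0$. Then $$c^*(m)\le \frac{1+y^*(m)}{y^*(m)}.$$ In particular the $SDPA$ bound is at most the $SDP_0$ bound.
   Context: Let $\Phi_k(t)=\sum_{d=0}^k p_{kd}t^d$ ($k\ge0$) be real polynomials of degree $k$ (the zonal spherical functions of a 2-point-homogeneous space, normalized by $\Phi_k(\tau_0)=1$), and let $a<b$ be reals. For reals $s_0,\ldots,s_{2m-1}$ and $\alpha<\beta$: $R_m=(s_{i+j-2})_{i,j=1}^m$, $F_m^+(\alpha)=(s_{i+j-1}-\alpha s_{i+j-2})_{i,j=1}^m$, $F_m^-(\beta)=(\beta s_{i+j-2}-s_{i+j-1})_{i,j=1}^m$, $H_m(s_0,\ldots,s_{2m-1},[\alpha,\beta])=\operatorname{diag}(R_m,F_m^+(\alpha),F_m^-(\beta))$. $SDP_0$ problem: minimize $y$ over reals $y,x_1,\ldots,x_{2m-1}$ subject to $y+\sum_{i=1}^k p_{ki}x_i\ge -p_{k0}$ for $k=1,\ldots,2m-1$ and $H_m(1,x_1,\ldots,x_{2m-1},[a,b])\succeq0$. $SDPA$ problem: given an integer $\ell\ge1$, reals $a=u_1<\cdots<u_{\ell+1}=b$, and an arbitrary additional set $\mathcal A$ of constraints on $(c,(x_i^{(k)}))$, maximize $c$ over reals $c,z,(x_i^{(k)})_{1\le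 i\le\ell,\,0\le k\le 2m-1}$ subject to: $\begin{pmatrix}1&c\\ c&z\end{pmatrix}\succeq0$; $z=c+\sum_{i=1}^\ell x_i^{(0)}$; $c+\sum_{d=0}^k p_{kd}\sum_{i=1}^\ell x_i^{(d)}\ge0$ for $k=1,\ldots,2m-1$; $H_m(x_i^{(0)},\ldots,x_i^{(2m-1)},[u_i,u_{i+1}])\succeq0$ for $i=1,\ldots,\ell$; and the constraints $\mathcal A$. Optimal values are understood as infimum/supremum. *)

(* Defs.v *)
From HB Require Import structures.
From mathcomp Require Import all_boot all_order all_algebra.
From mathcomp Require Import classical_sets reals constructive_ereal ereal.
Unset Printing Implicit Defensive.
Import Order.TTheory GRing.Theory Num.Theory.
Local Open Scope ring_scope.

Section Defs.
Variable R : realType.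

Definition psd {n : nat} (A : 'M[R]_n) : Prop :=
  A^T = A /\ forall v : 'cV[R]_n, 0 <= (v^T *m A *m v) 0 0.

(* 0-based indices: entry (i,j) of R_m is s_{i+j}, i.e. s_{i'+j'-2} with i'=i+1 *)
Definition hankelR m (s : nat -> R) : 'M[R]_m := \matrix_(i, j) s (i + j)%N.
Definition hankelFplus m (s : nat -> R) (al : R) : 'M[R]_m :=
  \matrix_(i, j) (s (i + j).+1 - al * s (i + j)%N).
Definition hankelFminus m (s : nat -> R) (be : R) : 'M[R]_m :=
  \matrix_(i, j) (be * s (i + j)%N - s (i + j).+1).

Definition Hm m (s : nat -> R) (al be : R) : 'M[R]_(m + (m + m)) :=
  block_mx (hankelR m s) 0 0 (block_mx (hankelFplus m s al) 0 0 (hankelFminus m s be)).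

Definition sdp0_feasible (Phi : nat -> {poly R}) (m : nat) (a b : R) (y : R) : Prop :=
  exists x : nat -> R,
    (forall k : nat, (1 <= k <= (2 * m).-1)%N ->
       y + \sum_(1 <= i < k.+1) (Phi k)`_i * x i >= - (Phi k)`_0)
    /\ psd (Hm m (fun d => if d == 0%N then 1 else x d) a b).

Definition mx2 (c z : R) : 'M[R]_2 :=
  \matrix_(i, j) (if (i == 0%N :> nat) && (j == 0%N :> nat) then 1
                  else if (i == 1%N :> nat) && (j == 1%N :> nat) then z else c).

(* Feasibility of c in SDPA; x i d stands for x_{i+1}^{(d)}, interval i is [u i, u (i+1)] *)
Definition sdpa_feasible (Phi : nat -> {poly R}) (m l : nat) (u : nat -> R)
    (A : R -> ('I_l -> 'I_(2 * m) -> R) -> Prop) (c : R) : Prop :=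
  exists (z : R) (x : 'I_l -> nat -> R),
    [/\ psd (mx2 c z),
        z = c + \sum_(i < l) x i 0%N,
        (forall k : nat, (1 <= k <= (2 * m).-1)%N ->
           0 <= c + \sum_(0 <= d < k.+1) (Phi k)`_d * \sum_(i < l) x i d),
        (forall i : 'I_l, psd (Hm m (x i) (u i) (u i.+1))) &
        A c (fun i (k : 'I_(2 * m)) => x i k)].

Local Open Scope classical_set_scope.
Local Open Scope ereal_scope.

Definition y_star Phi m a b : \bar R :=
  ereal_inf [set y%:E | y in [set y | sdp0_feasible Phi m a b y]].
Definition c_star Phi m l u A : \bar R :=
  ereal_sup [set c%:E | c in [set c | sdpa_feasible Phi m l u A c]].
End Defs.
Arguments y_star {R}.
Arguments c_star {R}.
Arguments sdp0_feasible {R}.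
Arguments sdpa_feasible {R}.
Arguments Hm {R}.

(* Main.v *)
Require Import Defs.
From HB Require Import structures.
From mathcomp Require Import all_boot all_order all_algebra.
From mathcomp Require Import classical_sets reals constructive_ereal ereal.
From mathcomp Require Import ring lra boolp.
Import Order.TTheory GRing.Theory Num.Theory.
Local Open Scope ring_scope.

Section Aux.
Variable R : realType.

Lemma quad_block m n (A : 'M[R]_m) (B : 'M[R]_n) (v1 : 'cV[R]_m) (v2 : 'cV[R]_n) :
  ((col_mx v1 v2)^T *m block_mx A 0 0 B *m col_mx v1 v2) 0 0 =
  (v1^T *m A *m v1) 0 0 + (v2^T *m B *m v2) 0 0.
Proof.
by rewrite tr_col_mx mul_row_block !mulmx0 (addr0 (v1^T *m A)) (add0r (v2^T *m B)) mul_row_col !mxE.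
Qed.

Lemma psd_block m n (A : 'M[R]_m) (B : 'M[R]_n) :
  psd R (block_mx A 0 0 B) <-> psd R A /\ psd R B.
Proof.
split.
- case; rewrite tr_block_mx !trmx0 => /eq_block_mx [hA _ _ hB] hq.
  split; split => // v.
  + by have := hq (col_mx v 0); rewrite quad_block mulmx0 [X in _ + X]mxE addr0.
  + by have := hq (col_mx 0 v); rewrite quad_block trmx0 !mul0mx [X in X + _]mxE add0r.
- case=> [[hA qA] [hB qB]]; split; first by rewrite tr_block_mx !trmx0 hA hB.
  move=> v; rewrite -(vsubmxK v) quad_block; exact: addr_ge0.
Qed.

Lemma psdD n (A B : 'M[R]_n) : psd R A -> psd R B -> psd R (A + B).
Proof.
case=> hA qA [hB qB]; split; first by rewrite linearD /= hA hB.
by move=> v; rewrite mulmxDr mulmxDl mxE addr_ge0.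
Qed.

Lemma psdZ n (k : R) (A : 'M[R]_n) : 0 <= k -> psd R A -> psd R (k *: A).
Proof.
move=> hk [hA qA]; split; first by rewrite linearZ /= hA.
by move=> v; rewrite -scalemxAr -scalemxAl mxE mulr_ge0.
Qed.

Lemma psd0 n : psd R (0 : 'M[R]_n).
Proof. by split; [rewrite trmx0 | move=> v; rewrite mulmx0 mul0mx mxE]. Qed.

Lemma psd_sum n l (F : 'I_l -> 'M[R]_n) : (forall i, psd R (F i)) -> psd R (\sum_i F i).
Proof. move=> h; apply: (big_ind (psd R)) => //; [exact: psd0 | exact: psdD]. Qed.

Lemma psd_Hm m s al be :
  psd R (Hm m s al be) <->
  [/\ psd R (hankelR R m s), psd R (hankelFplus R m s al) & psd R (hankelFminus R m s be)].
Proof.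
rewrite /Hm psd_block psd_block; split; first by case=> ? [].
by case=> ? ? ?.
Qed.

Lemma mx2_quad c z : psd R (mx2 R c z) -> c ^+ 2 <= z.
Proof.
case=> _ /(_ (\col_(i < 2) (if i == 0 :> nat then - c else 1))).
rewrite !mxE !big_ord_recl !big_ord0 /= !mxE !big_ord_recl !big_ord0 /= !mxE /=.
move=> h. rewrite -subr_ge0. apply: le_trans h _. rewrite le_eqVlt; apply/orP; left; apply/eqP.
ring.
Qed.

Lemma hankelR_lin m l (x : 'I_l -> nat -> R) (k : R) :
  hankelR R m (fun d => k * \sum_i x i d) = k *: \sum_i hankelR R m (x i).
Proof.
apply/matrixP => p q; rewrite !mxE summxE; congr (_ * _).
by apply: eq_bigr => i _; rewrite mxE.
Qed.

Lemma hankelFp_lin m l (x : 'I_l -> nat -> R) (k a : R) (w : 'I_l -> R) :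
  hankelFplus R m (fun d => k * \sum_i x i d) a =
  k *: \sum_i (hankelFplus R m (x i) (w i) + (w i - a) *: hankelR R m (x i)).
Proof.
apply/matrixP => p q; rewrite !mxE summxE.
under [in RHS]eq_bigr do rewrite !mxE.
rewrite [in RHS](eq_bigr (fun i => x i (p + q)%N.+1 - a * x i (p + q)%N)); last first.
  by move=> i _; ring.
rewrite sumrB -mulr_sumr; ring.
Qed.

Lemma hankelFm_lin m l (x : 'I_l -> nat -> R) (k b : R) (w : 'I_l -> R) :
  hankelFminus R m (fun d => k * \sum_i x i d) b =
  k *: \sum_i (hankelFminus R m (x i) (w i) + (b - w i) *: hankelR R m (x i)).
Proof.
apply/matrixP => p q; rewrite !mxE summxE.
under [in RHS]eq_bigr do rewrite !mxE.
rewrite [in RHS](eq_bigr (fun i => b * x i (p + q)%N - x i (p + q)%N.+1)); last first.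
  by move=> i _; ring.
rewrite sumrB -mulr_sumr; ring.
Qed.
End Aux.

Theorem theorem6p2 (R : realType) (Phi : nat -> {poly R}) (tau0 a b : R)
    (m l : nat) (u : nat -> R) (A : R -> ('I_l -> 'I_(2 * m) -> R) -> Prop) (ys : R) :
  (forall k : nat, size (Phi k) = k.+1) ->
  (forall k : nat, (Phi k).[tau0] = 1) ->
  (1 <= m)%N -> (1 <= l)%N -> a < b ->
  u 0%N = a -> u l = b -> (forall i : nat, (i < l)%N -> u i < u i.+1) ->
  y_star Phi m a b = ys%:E -> 0 < ys ->
  (c_star Phi m l u A <= ((1 + ys) / ys)%:E)%E.
Proof.
move=> _ _ hm hl hab hu0 hul hinc hys ys0.
have mono : forall i j, (i <= j)%N -> (j <= l)%N -> u i <= u j.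
  move=> i j; elim: j => [|j IH] hij hjl.
    by rewrite leqn0 in hij; rewrite (eqP hij).
  rewrite leq_eqVlt in hij; case/orP: hij => [/eqP->//|hij].
  apply: le_trans (IH hij (ltnW hjl)) _; exact/ltW/hinc.
apply: ge_ereal_sup => _ [c hc <-]; rewrite lee_fin.
have h1 : 1 <= (1 + ys) / ys by rewrite ler_pdivlMr // mul1r lerDr ltW.
case: (lerP c 1) => hc1; first exact: le_trans hc1 h1.
case: hc => z [x [hM hz hcon hH _]].
pose X := fun d => \sum_(i < l) x i d.
have hz2 := @mx2_quad R c z hM.
have eX : X 0%N = z - c by rewrite /X hz addrC addKr.
have X0ge : c ^+ 2 - c <= X 0%N by rewrite eX lerB.
have X0pos : 0 < X 0%N by apply: lt_le_trans X0ge; nra.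
have feas : sdp0_feasible Phi m a b (c / X 0%N).
  exists (fun d => X d / X 0%N); split.
  - move=> k hk; have h := hcon k hk; rewrite big_ltn // in h.
    under [Y in _ <= _ + Y]eq_bigr do rewrite mulrA.
    rewrite -mulr_suml -mulrDl ler_pdivlMr //.
    by rewrite /X mulNr; lra.
  - set f := (fun d => if _ then _ else _).
    have -> : f = (fun d => (X 0%N)^-1 * \sum_i x i d).
      apply: funext => d; rewrite /f; case: eqP => [->|_]; first by rewrite mulVf // gt_eqF.
      by rewrite mulrC.
    apply/psd_Hm; split.
    + rewrite hankelR_lin; apply: psdZ; first by rewrite invr_ge0 ltW.
      apply: psd_sum => i; by case/psd_Hm: (hH i).
    + rewrite (@hankelFp_lin R _ _ _ _ _ (fun i : 'I_l => u i)).
      apply: psdZ; first by rewrite invr_ge0 ltW.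
      apply: psd_sum => i; case/psd_Hm: (hH i) => hR hF _.
      apply: psdD => //; apply: psdZ => //.
      by rewrite subr_ge0 -hu0; apply: mono => //; exact: ltnW.
    + rewrite (@hankelFm_lin R _ _ _ _ _ (fun i : 'I_l => u i.+1)).
      apply: psdZ; first by rewrite invr_ge0 ltW.
      apply: psd_sum => i; case/psd_Hm: (hH i) => hR _ hF.
      apply: psdD => //; apply: psdZ => //.
      by rewrite subr_ge0 -hul; apply: mono.
have hy : ys <= c / X 0%N.
  rewrite -lee_fin -hys; apply: ereal_inf_lbound; by exists (c / X 0%N).
move: hy; rewrite ler_pdivlMr // => hy.
rewrite ler_pdivlMr //.
have hp : 0 <= ys * (X 0%N - (c ^+ 2 - c)) by apply: mulr_ge0; [exact: ltW | rewrite subr_ge0].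
nra.
Qed.
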